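(* Let $P,PA$ be labelings and $c$ a command with $P;PA\vdash_{\mathtt{true}}c$, and let $\rho_1\sim_P\rho_2$, $\mu_1\sim_{PA}\mu_2$. If $\langle c,\rho_1,\mu_1\rangle\approx\langle c,\rho_2,\mu_2\rangle$, then $\langle c,\rho_1,\mu_1,\mathtt{false}\rangle\approx_i\langle c,\rho_2,\mu_2,\mathtt{false}\rangle$, i.e., for every directive list $D$ and observation lists $O_1,O_2$, if $\langle c,\rho_k,\mu_k,\mathtt{false}\rangle\xrightarrow[D]{O_k}{}_i^*$ some configuration for $k=1,2$ (ideal semantics w.r.t. $P$), then $O_1=O_2$.
   Context: Language AWhile: scalar variables $X\in\mathcal V$, arrays $a\in\mathcal A$; $e::=n\mid X\mid\mathrm{op}_{\mathbb N}(e,\dots,e)\mid be\,?\,e_1:e_2$; $be::=\mathtt{true}\mid\mathtt{false}\mid\mathrm{cmp}(e,e)\mid\mathrm{op}_{\mathbb B}(be,\dots,be)$; $c::=\mathtt{skip}\mid X:=e\mid c_1;c_2\mid\mathtt{if}\ be\ \mathtt{then}\ c_1\ \mathtt{else}\ c_2\mid\mathtt{while}\ be\ \mathtt{do}\ c\mid X\leftarrow a[e]\mid a[e]\leftarrow e'$. Scalar state $\rho:\mathcal V\to\mathbb N$; array state $\mu$ with sizes $|a|_\mu$ and values $\mu(a)[i]$; $[\![\cdot]\!]_\rho$ pure evaluation. Sequential semantics: steps $\langle c,\rho,\mu\rangle\xrightarrow{o}\langle c',\rho',\mu'\rangle$ with optional observation: $X:=e\to\mathtt{skip}$ updating $X$;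 $c_1;c_2\xrightarrow{o}c_1';c_2$ if $c_1\xrightarrow{o}c_1'$; $\mathtt{skip};c\to c$; conditional goes to branch $v=[\![be]\!]_\rho$ observing $\mathrm{branch}(v)$; $\mathtt{while}\ be\ \mathtt{do}\ c\to\mathtt{if}\ be\ \mathtt{then}\ (c;\mathtt{while}\ be\ \mathtt{do}\ c)\ \mathtt{else}\ \mathtt{skip}$; $X\leftarrow a[ie]$ with $i=[\![ie]\!]_\rho<|a|_\mu$ sets $X:=\mu(a)[i]$ observing $\mathrm{read}(a,i)$; $a[ie]\leftarrow e$ with $i<|a|_\mu$ sets $\mu[a[i]\mapsto[\![e]\!]_\rho]$ observing $\mathrm{write}(a,i)$. $\langle c_1,\rho_1,\mu_1\rangle\approx\langle c_2,\rho_2,\mu_2\rangle$ iff for all multi-step executions $\langle c_k,\rho_k,\mu_k\rangle\xrightarrow{O_k}{}^*$ (any prefix), one of $O_1,O_2$ is a prefix of the other. Labels: $\mathtt{true}$=public, $\mathtt{false}$=secret; $\ell_1\sqsubseteq\ell_2$ iff $\ell_2=\mathtt{true}\Rightarrow\ell_1=\mathtt{true}$; $\ell_1\sqcup\ell_2=\ell_1\wedge\ell_2$. $P(e),P(be)$ public iff all variables occurring are public. $\rho_1\sim_P\rho_2$ iff agreement on public scalar variables; $\mu_1\sim_{PA}\mu_2$ iff agreement on sizes and contents of public arrays. IFC typing $P;PA\vdash_{pc}c$: $\mathtt{skip}$; $X:=e$ if $pc\sqcup P(e)\sqsubseteq P(X)$; $c_1;c_2$ if both typed under $pc$; $\mathtt{if}$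 if both branches typed under $pc\sqcup P(be)$; $\mathtt{while}$ if body typed under $pc\sqcup P(be)$; $X\leftarrow a[i]$ if $pc\sqcup P(i)\sqcup PA(a)\sqsubseteq P(X)$; $a[i]\leftarrow e$ if $pc\sqcup P(i)\sqcup P(e)\sqsubseteq PA(a)$. Ideal semantics w.r.t. $P$: configurations $\langle c,\rho,\mu,\beta\rangle$; steps with optional observation and optional directive $d\in\{\mathit{step},\mathit{force},\mathrm{load}(a',j),\mathrm{store}(a',j)\}$. Non-observing rules as sequentially (flag kept, no directive). Conditional: $v=(P(be)\vee\neg\beta)\wedge[\![be]\!]_\rho$; $\mathit{step}$ goes to branch $v$; $\mathit{force}$ goes to branch $\neg v$ and sets $\beta:=\mathtt{true}$; obs $\mathrm{branch}(v)$. Read $X\leftarrow a[ie]$ with $\mathit{step}$: $i=0$ if $(P(ie)=\mathtt{false}\vee P(X)=\mathtt{true})\wedge\beta$, else $[\![ie]\!]_\rho$; requires $i<|a|_\mu$; $X:=\mu(a)[i]$; obs $\mathrm{read}(a,i)$. Read with $\mathrm{load}(a',j)$: requires $\beta=\mathtt{true}$, $P(ie)=\mathtt{true}$, $P(X)=\mathtt{false}$, $i=[\![ie]\!]_\rho\ge|a|_\mu$, $j<|a'|_\mu$; $X:=\mu(a')[j]$; obs $\mathrm{read}(a,i)$. Write $a[ie]\leftarrow ae$ with $\mathit{step}$: $i=0$ if $(P(ie)=\mathtt{false}\vee P(ae)=\mathtt{false})\wedge\beta$, else $[\![ie]\!]_\rho$; requires $i<|a|_\mu$; $\mu[a[i]\mapsto[\![ae]\!]_\rho]$;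 obs $\mathrm{write}(a,i)$. Write with $\mathrm{store}(a',j)$: requires $\beta=\mathtt{true}$, $P(ie)=P(ae)=\mathtt{true}$, $i\ge|a|_\mu$, $j<|a'|_\mu$; $\mu[a'[j]\mapsto[\![ae]\!]_\rho]$; obs $\mathrm{write}(a,i)$. Multi-step $\xrightarrow[D]{O}{}_i^*$ collects directives and observations. *)

(* Defs.v *)
From mathcomp Require Import all_boot.
Set Implicit Arguments.
Unset Strict Implicit.
Unset Printing Implicit Defensive.

Definition var := nat.
Definition arr := nat.

(* expressions: op_N and op_B are arbitrary n-ary operations, cmp an arbitrary
   binary comparison *)
Inductive aexp : Type :=
| ANum  (n : nat)
| AVar  (x : var)
| AOp   (f : seq nat -> nat) (es : seq aexp)
| ACond (b : bexp) (e1 e2 : aexp)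
with bexp : Type :=
| BTrue
| BFalse
| BCmp (f : nat -> nat -> bool) (e1 e2 : aexp)
| BOp  (f : seq bool -> bool) (bs : seq bexp).

Inductive com : Type :=
| Skip
| Assign (x : var) (e : aexp)
| Seq    (c1 c2 : com)
| If     (b : bexp) (c1 c2 : com)
| While  (b : bexp) (c : com)
| Read   (x : var) (a : arr) (ie : aexp)
| Write  (a : arr) (ie : aexp) (e : aexp).

Definition sstate := var -> nat.
Definition astate := arr -> seq nat.              (* mu: |a| = size (mu a), mu(a)[i] = nth 0 (mu a) i *)

Definition upd (rho : sstate) (x : var) (v : nat) : sstate :=
  fun y => if y == x then v else rho y.
Definition asize (mu : astate) (a : arr) : nat := size (mu a).
Definition aget (mu : astate) (a : arr) (i : nat) : nat := nth 0 (mu a) i.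
Definition aupd (mu : astate) (a : arr) (i v : nat) : astate :=
  fun b => if b == a then set_nth 0 (mu a) i v else mu b.

Fixpoint aeval (rho : sstate) (e : aexp) : nat :=
  match e with
  | ANum n => n
  | AVar x => rho x
  | AOp f es => f (map (aeval rho) es)
  | ACond b e1 e2 => if beval rho b then aeval rho e1 else aeval rho e2
  end
with beval (rho : sstate) (b : bexp) : bool :=
  match b with
  | BTrue => true
  | BFalse => false
  | BCmp f e1 e2 => f (aeval rho e1) (aeval rho e2)
  | BOp f bs => f (map (beval rho) bs)
  end.

(* labels: true = public, false = secret *)
Definition label := bool.
Definition lflow (l1 l2 : label) : Prop := l2 = true -> l1 = true.
Definition ljoin (l1 l2 : label) : label := l1 && l2.

Fixpoint alab (P : var -> label) (e : aexp) : label :=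
  match e with
  | ANum _ => true
  | AVar x => P x
  | AOp _ es => all (alab P) es
  | ACond b e1 e2 => [&& blab P b, alab P e1 & alab P e2]
  end
with blab (P : var -> label) (b : bexp) : label :=
  match b with
  | BTrue => true
  | BFalse => true
  | BCmp _ e1 e2 => alab P e1 && alab P e2
  | BOp _ bs => all (blab P) bs
  end.

Definition sagree (P : var -> label) (rho1 rho2 : sstate) : Prop :=
  forall x, P x = true -> rho1 x = rho2 x.
(* agreement on sizes and contents of public arrays *)
Definition aagree (PA : arr -> label) (mu1 mu2 : astate) : Prop :=
  forall a, PA a = true -> mu1 a = mu2 a.

Inductive obs : Type :=
| OBranch (v : bool)
| ORead   (a : arr) (i : nat)
| OWrite  (a : arr) (i : nat).

Inductive dir : Type :=
| DStep
| DForce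
| DLoad  (a : arr) (j : nat)
| DStore (a : arr) (j : nat).

Definition ocons {T} (o : option T) (l : seq T) : seq T :=
  match o with Some x => x :: l | None => l end.

Inductive sstep : com -> sstate -> astate -> option obs -> com -> sstate -> astate -> Prop :=
| SAssign x e rho mu :
    sstep (Assign x e) rho mu None Skip (upd rho x (aeval rho e)) mu
| SSeq c1 c1' c2 rho mu o rho' mu' :
    sstep c1 rho mu o c1' rho' mu' ->
    sstep (Seq c1 c2) rho mu o (Seq c1' c2) rho' mu'
| SSeqSkip c rho mu :
    sstep (Seq Skip c) rho mu None c rho mu
| SIf b c1 c2 rho mu :
    let v := beval rho b in
    sstep (If b c1 c2) rho mu (Some (OBranch v)) (if v then c1 else c2) rho mu
| SWhile b c rho mu :
    sstep (While b c) rho mu None (If b (Seq c (While b c)) Skip) rho mu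
| SRead x a ie rho mu :
    let i := aeval rho ie in
    i < asize mu a ->
    sstep (Read x a ie) rho mu (Some (ORead a i)) Skip (upd rho x (aget mu a i)) mu
| SWrite a ie e rho mu :
    let i := aeval rho ie in
    i < asize mu a ->
    sstep (Write a ie e) rho mu (Some (OWrite a i)) Skip rho (aupd mu a i (aeval rho e)).

Inductive smulti : com -> sstate -> astate -> seq obs -> com -> sstate -> astate -> Prop :=
| SMRefl c rho mu : smulti c rho mu [::] c rho mu
| SMStep c rho mu o c' rho' mu' O c'' rho'' mu'' :
    sstep c rho mu o c' rho' mu' ->
    smulti c' rho' mu' O c'' rho'' mu'' ->
    smulti c rho mu (ocons o O) c'' rho'' mu''.

Definition prefix {T} (l1 l2 : seq T) : Prop := exists l, l2 = l1 ++ l.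

Definition sequiv (c1 : com) (rho1 : sstate) (mu1 : astate)
                  (c2 : com) (rho2 : sstate) (mu2 : astate) : Prop :=
  forall O1 c1' rho1' mu1' O2 c2' rho2' mu2',
    smulti c1 rho1 mu1 O1 c1' rho1' mu1' ->
    smulti c2 rho2 mu2 O2 c2' rho2' mu2' ->
    prefix O1 O2 \/ prefix O2 O1.

Inductive typed (P : var -> label) (PA : arr -> label) : label -> com -> Prop :=
| TSkip pc : typed P PA pc Skip
| TAssign pc x e :
    lflow (ljoin pc (alab P e)) (P x) -> typed P PA pc (Assign x e)
| TSeq pc c1 c2 :
    typed P PA pc c1 -> typed P PA pc c2 -> typed P PA pc (Seq c1 c2)
| TIf pc b c1 c2 :
    typed P PA (ljoin pc (blab P b)) c1 -> typed P PA (ljoin pc (blab P b)) c2 ->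
    typed P PA pc (If b c1 c2)
| TWhile pc b c :
    typed P PA (ljoin pc (blab P b)) c -> typed P PA pc (While b c)
| TRead pc x a ie :
    lflow (ljoin (ljoin pc (alab P ie)) (PA a)) (P x) -> typed P PA pc (Read x a ie)
| TWrite pc a ie e :
    lflow (ljoin (ljoin pc (alab P ie)) (alab P e)) (PA a) -> typed P PA pc (Write a ie e).

Inductive istep (P : var -> label) :
  com -> sstate -> astate -> bool -> option obs -> option dir ->
  com -> sstate -> astate -> bool -> Prop :=
| IAssign x e rho mu beta :
    istep P (Assign x e) rho mu beta None None Skip (upd rho x (aeval rho e)) mu beta
| ISeq c1 c1' c2 rho mu beta o d rho' mu' beta' :
    istep P c1 rho mu beta o d c1' rho' mu' beta' ->
    istep P (Seq c1 c2) rho mu beta o d (Seq c1' c2) rho' mu' beta'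
| ISeqSkip c rho mu beta :
    istep P (Seq Skip c) rho mu beta None None c rho mu beta
| IWhile b c rho mu beta :
    istep P (While b c) rho mu beta None None (If b (Seq c (While b c)) Skip) rho mu beta
| IIfStep b c1 c2 rho mu beta :
    let v := (blab P b || ~~ beta) && beval rho b in
    istep P (If b c1 c2) rho mu beta (Some (OBranch v)) (Some DStep)
          (if v then c1 else c2) rho mu beta
| IIfForce b c1 c2 rho mu beta :
    let v := (blab P b || ~~ beta) && beval rho b in
    istep P (If b c1 c2) rho mu beta (Some (OBranch v)) (Some DForce)
          (if ~~ v then c1 else c2) rho mu true
| IReadStep x a ie rho mu beta :
    let i := if (~~ alab P ie || P x) && beta then 0 else aeval rho ie in
    i < asize mu a ->
    istep P (Read x a ie) rho mu beta (Some (ORead a i)) (Some DStep)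
          Skip (upd rho x (aget mu a i)) mu beta
| IReadLoad x a ie rho mu beta a' j :
    let i := aeval rho ie in
    beta = true -> alab P ie = true -> P x = false ->
    asize mu a <= i -> j < asize mu a' ->
    istep P (Read x a ie) rho mu beta (Some (ORead a i)) (Some (DLoad a' j))
          Skip (upd rho x (aget mu a' j)) mu beta
| IWriteStep a ie e rho mu beta :
    let i := if (~~ alab P ie || ~~ alab P e) && beta then 0 else aeval rho ie in
    i < asize mu a ->
    istep P (Write a ie e) rho mu beta (Some (OWrite a i)) (Some DStep)
          Skip rho (aupd mu a i (aeval rho e)) beta
| IWriteStore a ie e rho mu beta a' j :
    let i := aeval rho ie in
    beta = true -> alab P ie = true -> alab P e = true ->
    asize mu a <= i -> j < asize mu a' ->
    istep P (Write a ie e) rho mu beta (Some (OWrite a i)) (Some (DStore a' j))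
          Skip rho (aupd mu a' j (aeval rho e)) beta.

Inductive imulti (P : var -> label) :
  com -> sstate -> astate -> bool -> seq dir -> seq obs ->
  com -> sstate -> astate -> bool -> Prop :=
| IMRefl c rho mu beta : imulti P c rho mu beta [::] [::] c rho mu beta
| IMStep c rho mu beta o d c' rho' mu' beta' D O c'' rho'' mu'' beta'' :
    istep P c rho mu beta o d c' rho' mu' beta' ->
    imulti P c' rho' mu' beta' D O c'' rho'' mu'' beta'' ->
    imulti P c rho mu beta (ocons d D) (ocons o O) c'' rho'' mu'' beta''.

Definition iequiv (P : var -> label) (c1 : com) (rho1 : sstate) (mu1 : astate) (b1 : bool)
                  (c2 : com) (rho2 : sstate) (mu2 : astate) (b2 : bool) : Prop :=
  forall D O1 c1' rho1' mu1' b1' O2 c2' rho2' mu2' b2',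
    imulti P c1 rho1 mu1 b1 D O1 c1' rho1' mu1' b1' ->
    imulti P c2 rho2 mu2 b2 D O2 c2' rho2' mu2' b2' ->
    O1 = O2.

(* Main.v *)
Require Import Defs.
From mathcomp Require Import all_boot.
Set Implicit Arguments.

Section Eval.
Variables (P : var -> label) (rho1 rho2 : sstate).
Hypothesis H : sagree P rho1 rho2.

Fixpoint aeval_agree (e : aexp) {struct e} :
  alab P e = true -> aeval rho1 e = aeval rho2 e :=
  match e return alab P e = true -> aeval rho1 e = aeval rho2 e with
  | ANum _ => fun _ => erefl
  | AVar x => fun h => H h
  | AOp f es => fun h => f_equal f
      ((fix go (l : seq aexp) : all (alab P) l = true ->
           map (aeval rho1) l = map (aeval rho2) l :=
         match l return all (alab P) l = true ->
           map (aeval rho1) l = map (aeval rho2) l with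
         | [::] => fun _ => erefl
         | e' :: l' => fun h' =>
             let hh := andb_prop _ _ h' in
             f_equal2 cons (aeval_agree e' (proj1 hh)) (go l' (proj2 hh))
         end) es h)
  | ACond b e1 e2 => fun h =>
      let h1 := andb_prop _ _ h in
      let h2 := andb_prop _ _ (proj2 h1) in
      match esym (beval_agree b (proj1 h1)) in _ = bb
        return (if bb then aeval rho1 e1 else aeval rho1 e2) =
               (if beval rho2 b then aeval rho2 e1 else aeval rho2 e2) with
      | erefl => 
        match beval rho2 b as bb return (if bb then aeval rho1 e1 else aeval rho1 e2) =
               (if bb then aeval rho2 e1 else aeval rho2 e2) with
        | true => aeval_agree e1 (proj1 h2)
        | false => aeval_agree e2 (proj2 h2)
        end
      end
  end
with beval_agree (b : bexp) {struct b} :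
  blab P b = true -> beval rho1 b = beval rho2 b :=
  match b return blab P b = true -> beval rho1 b = beval rho2 b with
  | BTrue => fun _ => erefl
  | BFalse => fun _ => erefl
  | BCmp f e1 e2 => fun h =>
      let hh := andb_prop _ _ h in
      f_equal2 f (aeval_agree e1 (proj1 hh)) (aeval_agree e2 (proj2 hh))
  | BOp f bs => fun h => f_equal f
      ((fix go (l : seq bexp) : all (blab P) l = true ->
           map (beval rho1) l = map (beval rho2) l :=
         match l return all (blab P) l = true ->
           map (beval rho1) l = map (beval rho2) l with
         | [::] => fun _ => erefl
         | e' :: l' => fun h' =>
             let hh := andb_prop _ _ h' in
             f_equal2 cons (beval_agree e' (proj1 hh)) (go l' (proj2 hh))
         end) bs h)
  end.
End Eval.

Section Main.
Variables (P : var -> label) (PA : arr -> label).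

Fixpoint ok (c : com) : Prop := match c with
| Skip => True
| Assign x e => P x = true -> alab P e = true
| Seq c1 c2 => ok c1 /\ ok c2
| If b c1 c2 => ok c1 /\ ok c2
| While b c => ok c
| Read x a ie => P x = true -> alab P ie = true /\ PA a = true
| Write a ie e => PA a = true -> alab P ie = true /\ alab P e = true
end.

Lemma typed_ok pc c : typed P PA pc c -> ok c.
Proof.
elim=> /= {pc c}; try tauto.
- move=> pc x e H /H /andP[]//.
- move=> pc x a ie H /H /andP[/andP[_ ->] ->]//.
- move=> pc a ie e H /H /andP[/andP[_ ->] ->]//.
Qed.

Lemma od c r m b o d c' r' m' b' :
  istep P c r m b o d c' r' m' b' -> (o = None <-> d = None).
Proof. by elim=> //=; split. Qed.


End Main.
Lemma ok_step P PA c r m b o d c' r' m' b' :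
  istep P c r m b o d c' r' m' b' -> ok P PA c -> ok P PA c'.
Proof.
elim=> {c r m b o d c' r' m' b'} /=; try done.
- move=> c1 c1' c2 r m b o d r' m' b' _; tauto.
- by move=> c r m b [].
- by move=> b c1 c2 r m be [H1 H2]; case: ifP.
- by move=> b c1 c2 r m be [H1 H2]; case: ifP.
Qed.

Lemma beta_mono P c r m b o d c' r' m' b' :
  istep P c r m b o d c' r' m' b' -> b' = false -> b = false.
Proof. by elim. Qed.

Lemma nonespec P c r m b o d c' r' m' b' :
  istep P c r m b o d c' r' m' b' -> b = false ->
  exists c'' r'' m'', sstep c r m o c'' r'' m'' /\
     (b' = false -> c'' = c' /\ r'' = r' /\ m'' = m').
Proof.
elim=> {c r m b o d c' r' m' b'}.
- move=> *; do 3 eexists; split; [constructor|done].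
- move=> c1 c1' c2 r m b o d r' m' b' _ IH /IH [c'' [r'' [m'' [H1 H2]]]].
  exists (Seq c'' c2), r'', m''; split; first by constructor.
  by move=> /H2 [-> [-> ->]].
- move=> *; do 3 eexists; split; [constructor|done].
- move=> *; do 3 eexists; split; [constructor|done].
- move=> b c1 c2 r m be /= ->; rewrite orbT /=.
  do 3 eexists; split; [constructor|done].
- move=> b c1 c2 r m be /= ->; rewrite orbT /=.
  do 3 eexists; split; [constructor|done].
- move=> x a ie r m be /= Hi ?; subst be; move: Hi; rewrite andbF => Hi.
  do 3 eexists; split; [by constructor|done].
- by move=> *; subst.
- move=> a ie e r m be /= Hi ?; subst be; move: Hi; rewrite andbF => Hi.
  do 3 eexists; split; [by constructor|done].
- by move=> *; subst.
Qed.

Ltac noskip := match goal with H : istep _ Skip _ _ _ _ _ _ _ _ _ |- _ => inversion H end.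

Lemma none_det P c r1 m1 b1 o1 d1 c1 r1' m1' b1' r2 m2 b2 o2 d2 c2 r2' m2' b2' :
  istep P c r1 m1 b1 o1 d1 c1 r1' m1' b1' ->
  istep P c r2 m2 b2 o2 d2 c2 r2' m2' b2' -> d1 = None -> d2 = None.
Proof.
move=> H; elim: H r2 m2 b2 o2 d2 c2 r2' m2' b2' => //.
- by move=> *; match goal with H : istep _ _ _ _ _ _ _ _ _ _ _ |- _ => inversion H end.
- move=> c0 c1' c2' r m b o d r' m' b' H1 IH r2 m2 b2 o2 d2 c2 r2' m2' b2' H2 Hd.
  inversion H2; subst; [by eapply IH; eauto | noskip].
- move=> c0 r m b r2 m2 b2 o2 d2 c2 r2' m2' b2' H2 _; inversion H2; subst => //; noskip.
- by move=> *; match goal with H : istep _ _ _ _ _ _ _ _ _ _ _ |- _ => inversion H end.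
Qed.
Lemma branch_eq P r1 r2 b be : sagree P r1 r2 ->
  (be = false -> (blab P b || ~~be) && beval r1 b = (blab P b || ~~be) && beval r2 b) ->
  (blab P b || ~~be) && beval r1 b = (blab P b || ~~be) && beval r2 b.
Proof.
move=> Hs; case: be => /= [_|/(_ erefl) //].
by case E: (blab P b) => //=; rewrite (beval_agree Hs _ E).
Qed.

Lemma idx_eq P r1 r2 ie (q be : bool) : sagree P r1 r2 ->
  (be = false -> (if (~~ alab P ie || q) && be then 0 else aeval r1 ie) =
                 (if (~~ alab P ie || q) && be then 0 else aeval r2 ie)) ->
  (if (~~ alab P ie || q) && be then 0 else aeval r1 ie) =
  (if (~~ alab P ie || q) && be then 0 else aeval r2 ie).
Proof.
move=> Hs; case: be => /= [_|/(_ erefl) //]; rewrite andbT.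
by case E: (alab P ie) => //=; case: q => //=; rewrite (aeval_agree Hs _ E).
Qed.

Lemma step_lock P PA : forall c r1 m1 b o1 d c1 r1' m1' b1,
 istep P c r1 m1 b o1 d c1 r1' m1' b1 ->
 forall r2 m2 o2 c2 r2' m2' b2,
 ok P PA c -> sagree P r1 r2 -> aagree PA m1 m2 ->
 istep P c r2 m2 b o2 d c2 r2' m2' b2 ->
 (b = false -> o1 = o2) ->
 [/\ o1 = o2, c1 = c2, b1 = b2, sagree P r1' r2' & aagree PA m1' m2'].
Proof.
move=> zc zr1 zm1 zb zo1 zd zc1 zr1p zm1p zb1; elim.
- move=> x e r m be r2 m2 o2 c2 r2' m2' b2 Hok Hs Ha H2 _; inversion H2; subst.
  split=> //. move=> y Hy. rewrite /upd. case: (y =P x) => [Exy|Nxy]; last exact: Hs.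
  subst y. exact: (aeval_agree Hs _ (Hok Hy)).
- move=> c0 c1' c2' r m be o d r' m' b' H1 IH r2 m2 o2 c2 r2' m2' b2 [Hok1 Hok2] Hs Ha H2 Ho.
  inversion H2; subst; last by noskip.
  by case: (IH _ _ _ _ _ _ _ Hok1 Hs Ha H12 Ho) => -> -> -> ? ?.
- move=> c0 r m be r2 m2 o2 c2 r2' m2' b2 _ Hs Ha H2 _; inversion H2; subst => //; noskip.
- move=> b c0 r m be r2 m2 o2 c2 r2' m2' b2 _ Hs Ha H2 _; inversion H2; subst => //.
- move=> bb c0 c3 r m be v r2 m2 o2 c2 r2' m2' b2 _ Hs Ha H2 Ho; inversion H2; subst.
  have E: v = v1 by rewrite /v /v1; apply: (branch_eq _ Hs) => /Ho [E]; exact: E.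
  by rewrite E; split.
- move=> bb c0 c3 r m be v r2 m2 o2 c2 r2' m2' b2 _ Hs Ha H2 Ho; inversion H2; subst.
  have E: v = v1 by rewrite /v /v1; apply: (branch_eq _ Hs) => /Ho [E]; exact: E.
  by rewrite E; split.
- move=> x a ie r m be i Hi r2 m2 o2 c2 r2' m2' b2 Hok Hs Ha H2 Ho; inversion H2; subst.
  have E: i = i1 by rewrite /i /i1; apply: (@idx_eq _ _ _ _ _ _ Hs) => /Ho [E]; exact: E.
  rewrite -E; split=> // y Hy; rewrite /upd; case: (y =P x) => [?|_]; last exact: Hs.
  subst y; case: (Hok Hy) => _ HA; by rewrite /aget (Ha _ HA).
- move=> x a ie r m be a' j i Hb Hie Hx Hsz Hj r2 m2 o2 c2 r2' m2' b2 Hok Hs Ha H2 Ho; inversion H2; subst.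
  have E: i = i0 by rewrite /i /i0; exact: (aeval_agree Hs _ Hie).
  rewrite -E; split=> // y Hy; rewrite /upd; case: (y =P x) => [?|_]; last exact: Hs.
  by subst y; rewrite Hx in Hy.
- move=> a ie e r m be i Hi r2 m2 o2 c2 r2' m2' b2 Hok Hs Ha H2 Ho; inversion H2; subst.
  have E: i = i1 by rewrite /i /i1; apply: (@idx_eq _ _ _ _ _ _ Hs) => /Ho [E]; exact: E.
  rewrite -E; split=> // y Hy; rewrite /aupd; case: (y =P a) => [?|_]; last exact: Ha.
  subst y; case: (Hok Hy) => _ He; by rewrite (Ha _ Hy) (aeval_agree Hs _ He).
- move=> a ie e r m be a' j i Hb Hie He Hsz Hj r2 m2 o2 c2 r2' m2' b2 Hok Hs Ha H2 Ho; inversion H2; subst.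
  have E: i = i1 by rewrite /i /i1; exact: (aeval_agree Hs _ Hie).
  rewrite -E; split=> // y Hy; rewrite /aupd; case: (y =P a') => [?|_]; last exact: Ha.
  subst y; by rewrite (Ha _ Hy) (aeval_agree Hs _ He).
Qed.

Lemma imulti_nil P c r m b O c' r' m' b' :
  imulti P c r m b [::] O c' r' m' b' -> O = [::].
Proof.
move=> H; remember [::] as D eqn:ED; elim: H ED => // c0 r0 m0 b0 o d c1 r1 m1 b1 D1 O0 c2 r2 m2 b2 s _ IH.
case: d s => //= s E; rewrite IH //.
by have [_ ->] := od s.
Qed.

Lemma imulti_inv P c r m b D O c'' r'' m'' b'' :
  imulti P c r m b D O c'' r'' m'' b'' ->
  (D = [::] /\ O = [::]) \/
  exists o d c' r' m' b' D' O', [/\ istep P c r m b o d c' r' m' b',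
     imulti P c' r' m' b' D' O' c'' r'' m'' b'', D = ocons d D' & O = ocons o O'].
Proof.
case; first by left.
move=> *; right; do 8 eexists; split; eauto.
Qed.

Lemma sequiv_step c r1 m1 r2 m2 o c' r1' m1' r2' m2' :
  sequiv c r1 m1 c r2 m2 -> sstep c r1 m1 o c' r1' m1' -> sstep c r2 m2 o c' r2' m2' ->
  sequiv c' r1' m1' c' r2' m2'.
Proof.
move=> H s1 s2 O1 c1 r1'' m1'' O2 c2 r2'' m2'' h1 h2.
case: (H _ _ _ _ _ _ _ _ (SMStep s1 h1) (SMStep s2 h2)) => [[l E]|[l E]]; [left|right]; exists l;
  case: o {s1 s2} E => [x|] /= E //; by case: E.
Qed.

Lemma main P PA : forall c r1 m1 b D O1 c1 r1' m1' b1,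
  imulti P c r1 m1 b D O1 c1 r1' m1' b1 ->
  forall r2 m2 O2 c2 r2' m2' b2,
  imulti P c r2 m2 b D O2 c2 r2' m2' b2 ->
  ok P PA c -> sagree P r1 r2 -> aagree PA m1 m2 ->
  (b = false -> sequiv c r1 m1 c r2 m2) -> O1 = O2.
Proof.
move=> zc zr1 zm1 zb zD zO1 zc1 zr1p zm1p zb1; elim.
- by move=> c r m b r2 m2 O2 c2 r2' m2' b2 H2 _ _ _ _; rewrite (imulti_nil H2).
move=> c r m b o d c' r' m' b' D O c'' r'' m'' b'' s1 R1 IH r2 m2 O2 c2 r2' m2' b2 H2 Hok Hs Ha Hq.
case: (imulti_inv H2) => {H2} [[ED EO]|[o2 [d2 [c2' [r2o [m2o [b2o [D2 [O2' [s2 R2 ED EO]]]]]]]]]].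
  case: d s1 ED => // s1 /= ED; subst; rewrite (imulti_nil R1).
  by have [_ ->] := od s1.
have [Ed ED2] : d = d2 /\ D = D2.
  case: d d2 s1 s2 ED => [x|] [y|] s1 s2 //= ED.
  - by case: ED => -> ->.
  - by have := none_det s2 s1 erefl.
  - by have := none_det s1 s2 erefl.
subst d2 D2 O2.
have Ho : b = false -> o = o2.
  move=> Hb; have Hsq := Hq Hb.
  have [c3 [r3 [m3 [t1 _]]]] := nonespec s1 Hb.
  have [c4 [r4 [m4 [t2 _]]]] := nonespec s2 Hb.
  case: o s1 t1 => [x|] s1 t1; last first.
    by have [/(_ erefl) Hd _] := od s1; have [_ /(_ Hd)] := od s2.
  case: o2 s2 t2 => [y|] s2 t2; last first.
    by have [/(_ erefl) Hd _] := od s2; have [_ /(_ Hd)] := od s1.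
  have := Hsq _ _ _ _ _ _ _ _ (SMStep t1 (SMRefl _ _ _)) (SMStep t2 (SMRefl _ _ _)).
  by case=> [[l /= [->]]|[l /= [->]]].
have [Eo Ec Eb Hs' Ha'] := step_lock s1 Hok Hs Ha s2 Ho.
subst o2 c2' b2o.
rewrite (IH _ _ _ _ _ _ _ R2 (ok_step PA s1 Hok) Hs' Ha') //.
move=> Hb'; have Hb := beta_mono s1 Hb'.
have [c3 [r3 [m3 [t1 /(_ Hb') [? [? ?]]]]]] := nonespec s1 Hb.
have [c4 [r4 [m4 [t2 /(_ Hb') [? [? ?]]]]]] := nonespec s2 Hb.
move: (Hq Hb) => Hq'; subst; exact: sequiv_step Hq' t1 t2.
Qed.

Theorem lemma5p4 (P : var -> label) (PA : arr -> label) (c : com)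
    (rho1 rho2 : sstate) (mu1 mu2 : astate) :
  typed P PA true c ->
  sagree P rho1 rho2 ->
  aagree PA mu1 mu2 ->
  sequiv c rho1 mu1 c rho2 mu2 ->
  forall (D : seq dir) (O1 O2 : seq obs)
         (c1' c2' : com) (rho1' rho2' : sstate) (mu1' mu2' : astate) (b1 b2 : bool),
    imulti P c rho1 mu1 false D O1 c1' rho1' mu1' b1 ->
    imulti P c rho2 mu2 false D O2 c2' rho2' mu2' b2 ->
    O1 = O2.
Proof.
move=> Ht Hs Ha Hq D O1 O2 c1' c2' rho1' rho2' mu1' mu2' b1 b2 H1 H2.
exact: (main H1 H2 (typed_ok Ht) Hs Ha (fun _ => Hq)).
Qed.
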